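(* Let $\rho,\sigma$ be full-rank density operators on a finite-dimensional Hilbert space. For any $x\le\lambda_{\min}(\rho)$, $$\beta_{1-x}(\rho\|\sigma)=x\exp\bigl(-\widetilde D_{+\infty}(\rho\|\sigma)\bigr),\qquad 1-\beta_x(\rho\|\sigma)=x\exp\bigl(-\widetilde D_{-\infty}(\rho\|\sigma)\bigr),$$ $$\widehat\beta^{\mathrm R}_{1-x}(\rho\|\sigma)=x\exp\bigl(-D_{+\infty}(\rho\|\mathcal P_\rho(\sigma))\bigr),\qquad 1-\widehat\beta^{\mathrm R}_x(\rho\|\sigma)=x\exp\bigl(-D_{-\infty}(\rho\|\mathcal P_\rho(\sigma))\bigr).$$ Also, for any $x\le\lambda_{\min}(\mathcal P_\sigma(\rho))$, $$\widehat\beta^{\mathrm L}_{1-x}(\rho\|\sigma)=x\exp\bigl(-D_{+\infty}(\mathcal P_\sigma(\rho)\|\sigma)\bigr),\qquad 1-\widehat\beta^{\mathrm L}_x(\rho\|\sigma)=x\exp\bigl(-D_{-\infty}(\mathcal P_\sigma(\rho)\|\sigma)\bigr).$$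
   Context: $\beta_x(\rho\|\sigma)=\min\{\mathrm{Tr}(\sigma Q):0\le Q\le\mathbb1,\ \mathrm{Tr}(\rho Q)\ge1-x\}$. For $\tau=\sum_\lambda\lambda\Pi_\lambda$, $\mathcal P_\tau(X)=\sum_\lambda\Pi_\lambda X\Pi_\lambda$; $\widehat\beta^{\mathrm L}_x(\rho\|\sigma)=\beta_x(\mathcal P_\sigma(\rho)\|\sigma)$, $\widehat\beta^{\mathrm R}_x(\rho\|\sigma)=\beta_x(\rho\|\mathcal P_\rho(\sigma))$. $\widetilde D_{+\infty}(\rho\|\sigma)=\log\lambda_{\max}(\sigma^{-1/2}\rho\sigma^{-1/2})$ and $\widetilde D_{-\infty}(\rho\|\sigma)=-\log\lambda_{\max}(\rho^{-1/2}\sigma\rho^{-1/2})$ (the $\alpha\to\pm\infty$ limits of the minimal Rényi divergence); for commuting arguments these are written $D_{\pm\infty}$. $\exp$ and $\log$ share a base; $\lambda_{\min}$ is the smallest eigenvalue. *)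

(* Defs.v *)
From HB Require Import structures.
From mathcomp Require Import all_boot all_order all_algebra.
From mathcomp Require Import sesquilinear spectral.
From mathcomp Require Import complex.
From mathcomp Require Import boolp classical_sets reals sequences exp.

Set Implicit Arguments.
Unset Strict Implicit.
Unset Printing Implicit Defensive.

Import Order.TTheory GRing.Theory Num.Theory.
Local Open Scope ring_scope.
Local Open Scope classical_set_scope.
Local Open Scope complex_scope.
Local Open Scope sesquilinear_scope.

Section Defs.
Variable R : realType.
Local Notation C := R[i].

Definition psdmx n (A : 'M[C]_n) : Prop :=
  A \is hermsymmx /\ forall v : 'rV[C]_n, 0 <= (v *m A *m v ^t*) 0 0.

Definition loewner_le n (A B : 'M[C]_n) : Prop := psdmx (B - A).

Definition density n (rho : 'M[C]_n) : Prop := psdmx rho /\ \tr rho = 1.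

Definition full_rank n (A : 'M[C]_n) : Prop := \rank A = n.

Definition feasible_test n (x : R) (rho : 'M[C]_n) (Q : 'M[C]_n) : Prop :=
  loewner_le 0 Q /\ loewner_le Q 1%:M /\ ((1 - x)%:C <= \tr (rho *m Q)).

Definition beta n (x : R) (rho sigma : 'M[C]_n) : R :=
  inf [set complex.Re (\tr (sigma *m Q)) | Q in feasible_test x rho].

(* extreme eigenvalues of a Hermitian matrix (its eigenvalues are real) *)
Definition lambda_max n (A : 'M[C]_n) : R := sup [set r : R | eigenvalue A r%:C].
Definition lambda_min n (A : 'M[C]_n) : R := inf [set r : R | eigenvalue A r%:C].

Definition mxfun n (f : C -> C) (A : 'M[C]_n) : 'M[C]_n :=
  invmx (spectralmx A) *m diag_mx (map_mx f (spectral_diag A)) *m spectralmx A.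

Definition mx_inv_sqrt n (A : 'M[C]_n) : 'M[C]_n :=
  mxfun (fun z : C => ((Num.sqrt (complex.Re z))^-1)%:C) A.

(* max-/min-relative entropies (alpha -> +oo / -oo limits of the sandwiched
   Renyi divergence); exp and log are the natural ones (shared base). *)
Definition D_plus_infty n (rho sigma : 'M[C]_n) : R :=
  ln (lambda_max (mx_inv_sqrt sigma *m rho *m mx_inv_sqrt sigma)).
Definition D_minus_infty n (rho sigma : 'M[C]_n) : R :=
  - ln (lambda_max (mx_inv_sqrt rho *m sigma *m mx_inv_sqrt rho)).

Definition spectrum n (tau : 'M[C]_n) : seq C :=
  undup [seq spectral_diag tau 0 i | i <- enum 'I_n].

Definition eigenproj n (tau : 'M[C]_n) (a : C) : 'M[C]_n :=
  proj_ortho (eigenspace tau a).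

Definition pinching n (tau X : 'M[C]_n) : 'M[C]_n :=
  \sum_(a <- spectrum tau) (eigenproj tau a *m X *m eigenproj tau a).

Definition betaL n (x : R) (rho sigma : 'M[C]_n) : R :=
  beta x (pinching sigma rho) sigma.
Definition betaR n (x : R) (rho sigma : 'M[C]_n) : R :=
  beta x rho (pinching rho sigma).

End Defs.

(* Main.v *)
Require Import Defs.
From HB Require Import structures.
From mathcomp Require Import all_boot all_order all_algebra.
From mathcomp Require Import sesquilinear spectral.
From mathcomp Require Import complex.
From mathcomp Require Import boolp classical_sets reals sequences exp.
From mathcomp Require Import ring lra.

Set Implicit Arguments.
Unset Strict Implicit.
Unset Printing Implicit Defensive.
Import Order.TTheory GRing.Theory Num.Theory.
Local Open Scope complex_scope.
Local Open Scope ring_scope.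
Local Open Scope classical_set_scope.
Local Open Scope sesquilinear_scope.

Section S.
Variable R : realType.
Local Notation C := R[i].

Definition qf n (M : 'M[C]_n) (u : 'rV[C]_n) : C := (u *m M *m u^t*) 0 0.
Definition sf n (P : 'M[C]_n) (f : 'rV[C]_n) : 'M[C]_n := P^t* *m diag_mx f *m P.

Section Unit.
Variables (n : nat) (P : 'M[C]_n).
Hypothesis PU : P \is unitarymx.

Lemma U1 : P *m P^t* = 1%:M.
Proof. exact/unitarymxP. Qed.
Lemma U2 : P^t* *m P = 1%:M.
Proof. by rewrite -invmx_unitary // mulVmx // unitarymx_unit. Qed.

Lemma sfM f g : sf P f *m sf P g = sf P (\row_j (f 0 j * g 0 j)).
Proof.
rewrite /sf -!mulmxA [P *m (_ *m _)]mulmxA U1 mul1mx.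
by rewrite [diag_mx f *m _]mulmxA mulmx_diag.
Qed.



Lemma sf_tr f : (sf P f)^t* = sf P (map_mx Num.conj f).
Proof.
rewrite /sf !trmx_mul !map_mxM trmxCK tr_diag_mx map_diag_mx mulmxA.
by [].
Qed.

Lemma sf_herm f : map_mx Num.conj f = f -> (sf P f)^t* = sf P f.
Proof. by move=> h; rewrite sf_tr h. Qed.


Lemma qf_diag (f : 'rV[C]_n) u :
  qf (diag_mx f) u = \sum_j f 0 j * (u 0 j * (u 0 j)^*).
Proof.
rewrite /qf mul_mx_diag !mxE; apply: eq_bigr => j _; rewrite !mxE.
by rewrite mulrCA mulrA.
Qed.

Lemma qf_sf f v :
  qf (sf P f) v = \sum_j f 0 j * ((v *m P^t*) 0 j * ((v *m P^t*) 0 j)^*).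
Proof.
rewrite -qf_diag /qf /sf !mulmxA trmx_mul map_mxM trmxCK !mulmxA.
by [].
Qed.

Lemma row_sf f i : row i P *m sf P f = f 0 i *: row i P.
Proof.
rewrite /sf !mulmxA -[row i P *m _]row_mul U1 row1 -rowE row_diag_mx.
by rewrite -scalemxAl -rowE.
Qed.


Lemma qf_row (X : 'M[C]_n) j : qf X (row j P) = (P *m X *m P^t*) j j.
Proof.
rewrite /qf !mxE; apply: eq_bigr => k _; rewrite !mxE; congr (_ * _).
by apply: eq_bigr => l _; rewrite !mxE.
Qed.

Lemma tr_sf f (X : 'M[C]_n) :
  \tr (sf P f *m X) = \sum_j f 0 j * qf X (row j P).
Proof.
rewrite /sf -!mulmxA mxtrace_mulC -!mulmxA.
rewrite mul_diag_mx /mxtrace. apply: eq_bigr => j _.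
by rewrite mxE qf_row mulmxA.
Qed.

Lemma sf_sum I (s : seq I) (F : I -> 'rV[C]_n) :
  \sum_(a <- s) sf P (F a) = sf P (\sum_(a <- s) F a).
Proof.
rewrite /sf; elim: s => [|a s IH]; first by rewrite !big_nil raddf0 mulmx0 mul0mx.
by rewrite !big_cons IH raddfD /= mulmxDr mulmxDl.
Qed.

Lemma sf1 : sf P (const_mx 1) = 1%:M.
Proof.
rewrite /sf (_ : diag_mx _ = 1%:M) ?mulmx1 ?U2 //.
by apply/matrixP => i j; rewrite !mxE.
Qed.

End Unit.

Lemma trC_mul m k p (X : 'M[C]_(m, k)) (Y : 'M[C]_(k, p)) :
  (X *m Y)^t* = Y^t* *m X^t*.
Proof. by rewrite trmx_mul map_mxM. Qed.

Lemma trCK m k (M : 'M[C]_(m, k)) : M^t*^t* = M.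
Proof. by apply/matrixP => i j; rewrite !mxE conjCK. Qed.

Lemma trC3 n (X Y Z : 'M[C]_n) : (X *m Y *m Z)^t* = Z^t* *m Y^t* *m X^t*.
Proof. by rewrite !trmx_mul !map_mxM mulmxA. Qed.

Lemma hermP n (M : 'M[C]_n) : M \is hermsymmx -> M^t* = M.
Proof. by move/is_hermitianmxP => {2}->; rewrite expr0 scale1r. Qed.

Lemma hermI n (M : 'M[C]_n) : M^t* = M -> M \is hermsymmx.
Proof. by move=> h; apply/is_hermitianmxP; rewrite expr0 scale1r h. Qed.

Lemma realCE (z : C) : z \is Num.real -> z = (complex.Re z)%:C.
Proof.
case: z => a b; rewrite realE !lecE /= => /orP[] /andP[/eqP h _].
  all: first [by rewrite h | by rewrite -h | idtac].
Qed.

Lemma qf0 n (M : 'M[C]_n) : qf M 0 = 0.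
Proof. by rewrite /qf !mul0mx mxE. Qed.

Lemma qfD n (M N : 'M[C]_n) v : qf (M + N) v = qf M v + qf N v.
Proof. by rewrite /qf mulmxDr mulmxDl mxE. Qed.

Lemma qfN n (M : 'M[C]_n) v : qf (- M) v = - qf M v.
Proof. by rewrite /qf mulmxN mulNmx mxE. Qed.

Lemma qfB n (M N : 'M[C]_n) v : qf (M - N) v = qf M v - qf N v.
Proof. by rewrite qfD qfN. Qed.

Lemma qfZ n (M : 'M[C]_n) c v : qf (c *: M) v = c * qf M v.
Proof. by rewrite /qf -scalemxAr -scalemxAl mxE. Qed.

Lemma qf_sum n I (s : seq I) (F : I -> 'M[C]_n) v :
  qf (\sum_(a <- s) F a) v = \sum_(a <- s) qf (F a) v.
Proof.
elim: s => [|a s IH]; first by rewrite !big_nil /qf mulmx0 mul0mx mxE.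
by rewrite !big_cons qfD IH.
Qed.

Lemma qf_conj n (T X : 'M[C]_n) v : qf (T *m X *m T^t*) v = qf X (v *m T).
Proof. by rewrite /qf trmx_mul map_mxM !mulmxA. Qed.

Lemma qf_dot n (v : 'rV[C]_n) : qf 1%:M v = dotmx v v.
Proof. by rewrite /qf mulmx1 dotmxE. Qed.

Lemma qf1_gt0 n (v : 'rV[C]_n) : v != 0 -> 0 < qf 1%:M v.
Proof. by rewrite qf_dot dnorm_gt0. Qed.

Lemma qf1_ge0 n (v : 'rV[C]_n) : 0 <= qf 1%:M v.
Proof. by rewrite qf_dot dnorm_ge0. Qed.

Lemma qf_eig n (M : 'M[C]_n) v a : v *m M = a *: v -> qf M v = a * qf 1%:M v.
Proof. by move=> h; rewrite /qf h mulmx1 -scalemxAl mxE. Qed.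


Section Herm.
Variables (n : nat) (A : 'M[C]_n).
Hypothesis hA : A \is hermsymmx.
Local Notation P := (spectralmx A).
Local Notation d := (spectral_diag A).
Let PU : P \is unitarymx := spectral_unitarymx A.

Definition dR i := complex.Re (d 0 i).

Lemma specE : A = sf P d.
Proof.
have /orthomx_spectralP {1}-> := hermitian_normalmx hA.
by rewrite invmx_unitary.
Qed.

Lemma dRE i : d 0 i = (dR i)%:C.
Proof.
apply: realCE; have /mxOverP := hermitian_spectral_diag_real hA; exact.
Qed.

Lemma row_eig i : row i P *m A = (dR i)%:C *: row i P.
Proof. by rewrite {2}specE row_sf // dRE. Qed.

Lemma qf1_row i : qf 1%:M (row i P) = 1.
Proof. by rewrite qf_row // mulmx1 U1 // mxE eqxx. Qed.

Lemma row_neq0 i : row i P != 0.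
Proof. by apply/eqP => h; move: (qf1_row i); rewrite h qf0 => /eqP; rewrite eq_sym oner_eq0. Qed.

Lemma qf_row_eig i : qf A (row i P) = (dR i)%:C.
Proof. by rewrite (qf_eig (row_eig i)) qf1_row mulr1. Qed.

Lemma eig_row i : eigenvalue A (dR i)%:C.
Proof. by apply/eigenvalueP; exists (row i P); [exact: row_eig | exact: row_neq0]. Qed.

Lemma qf1_sf v : qf 1%:M v =
  \sum_j ((v *m P^t*) 0 j * ((v *m P^t*) 0 j)^*).
Proof.
rewrite -(sf1 PU) qf_sf //; apply: eq_bigr => j _; by rewrite mxE mul1r.
Qed.

Lemma rayleigh_le (c : R) : (forall i, dR i <= c) ->
  forall v, qf A v <= c%:C * qf 1%:M v.
Proof.
move=> hc v; rewrite {1}specE qf_sf // qf1_sf mulr_sumr; apply: ler_sum => j _.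
by rewrite dRE ler_wpM2r ?mul_conjC_ge0 // lecR.
Qed.

Lemma rayleigh_ge (c : R) : (forall i, c <= dR i) ->
  forall v, c%:C * qf 1%:M v <= qf A v.
Proof.
move=> hc v; rewrite {1}specE qf_sf // qf1_sf mulr_sumr; apply: ler_sum => j _.
by rewrite dRE ler_wpM2r ?mul_conjC_ge0 // lecR.
Qed.


Lemma eig_bound r : eigenvalue A r%:C -> exists2 v, v != 0 & qf A v = r%:C * qf 1%:M v.
Proof. by move=> /eigenvalueP [v hv vn0]; exists v => //; apply: qf_eig. Qed.

Lemma lmax_spec (i0 : 'I_n) :
  exists i, lambda_max A = dR i /\ forall j, dR j <= dR i.
Proof.
have [i _ Hi] := @arg_maxP _ _ _ i0 predT dR isT.
exists i; split => //; last by move=> j; exact: Hi.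
have ub : ubound [set r : R | eigenvalue A r%:C] (dR i).
  move=> r /eig_bound [v vn0 hv].
  have := rayleigh_le (fun j => Hi j isT) v.
  by rewrite hv ler_pM2r ?qf1_gt0 // lecR.
have mem : [set r : R | eigenvalue A r%:C] (dR i) by exact: eig_row.
apply/eqP; rewrite eq_le; apply/andP; split.
  by apply: ge_sup => //; exists (dR i).
by apply: ub_le_sup => //; exists (dR i).
Qed.

Lemma lmin_spec (i0 : 'I_n) :
  exists i, lambda_min A = dR i /\ forall j, dR i <= dR j.
Proof.
have [i _ Hi] := @arg_minP _ _ _ i0 predT dR isT.
exists i; split => //; last by move=> j; exact: Hi.
have lb : lbound [set r : R | eigenvalue A r%:C] (dR i).
  move=> r /eig_bound [v vn0 hv].
  have := rayleigh_ge (fun j => Hi j isT) v.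
  by rewrite hv ler_pM2r ?qf1_gt0 // lecR.
have mem : [set r : R | eigenvalue A r%:C] (dR i) by exact: eig_row.
apply/eqP; rewrite eq_le; apply/andP; split.
  by apply: ge_inf => //; exists (dR i).
by apply: lb_le_inf => //; exists (dR i).
Qed.

End Herm.

Definition pd n (M : 'M[C]_n) :=
  M \is hermsymmx /\ forall v, v != 0 -> 0 < qf M v.

Lemma pd_dR n (M : 'M[C]_n) (hM : pd M) i : 0 < dR M i.
Proof.
by rewrite -ltcR -(qf_row_eig hM.1); apply: hM.2; apply: row_neq0.
Qed.

Lemma pd_of_dR n (M : 'M[C]_n) : M \is hermsymmx -> (forall i, 0 < dR M i) -> pd M.
Proof.
move=> hM hd; split => // v vn0.
case: n M v hM hd vn0 => [|n] M v hM hd vn0.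
  by move: vn0; rewrite (_ : v = 0) ?eqxx //; apply/rowP => -[].
have [i [_ hi]] := lmin_spec hM ord0.
apply: lt_le_trans (rayleigh_ge hM hi v).
by rewrite mulr_gt0 ?ltcR ?qf1_gt0.
Qed.

Lemma dens_pd n (M : 'M[C]_n) : density M -> full_rank M -> pd M.
Proof.
move=> [[hM psd] _] fr; apply: pd_of_dR => // i.
have ge0 : 0 <= dR M i by rewrite -lecR -(qf_row_eig hM); apply: psd.
rewrite lt_def ge0 andbT; apply/eqP => h0.
have Mu : M \in unitmx by rewrite -row_free_unit /row_free fr.
have := row_eig hM i; rewrite h0 scale0r => /(congr1 (mulmx^~ (invmx M))).
by rewrite mulmxK // mul0mx; apply/eqP; apply: row_neq0.
Qed.

Lemma conjR (r : R) : (r%:C)^* = r%:C.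
Proof. by apply: conj_Creal; rewrite realE !lecE /= eqxx /= le_total. Qed.

Lemma map_conjR k (h : C -> R) (f : 'rV[C]_k) :
  map_mx Num.conj (map_mx (fun z => (h z)%:C) f) = map_mx (fun z => (h z)%:C) f.
Proof. by apply/matrixP => i j; rewrite !mxE conjR. Qed.

Section Abs.
Variables (n : nat) (A B S T : 'M[C]_n.+1).
Hypotheses (hA : A \is hermsymmx) (hS : S^t* = S) (hT : T^t* = T).

Let Nm := S *m A *m S.

Let Nm_herm : Nm \is hermsymmx.
Proof. by apply: hermI; rewrite /Nm trC3 hS (hermP hA). Qed.

Lemma abs_tr (hTS : T *m S = 1%:M) (hST : S *m T = 1%:M) (hTT : T *m T = B)
  (X : 'M[C]_n.+1) : (forall v, 0 <= qf X v) ->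
  \tr (A *m X) <= (lambda_max Nm)%:C * \tr (B *m X).
Proof.
move=> hX.
have A_Nm : A = T *m Nm *m T.
  by rewrite /Nm !mulmxA hTS mul1mx -mulmxA hST mulmx1.
have [i [-> hi]] := lmax_spec Nm_herm ord0.
set Y := T *m X *m T.
have hY : forall v, 0 <= qf Y v by move=> v; rewrite /Y -{2}hT qf_conj.
have -> : \tr (A *m X) = \tr (Nm *m Y).
  by rewrite A_Nm /Y -!mulmxA mxtrace_mulC -!mulmxA.
have -> : \tr (B *m X) = \tr Y.
  by rewrite -hTT /Y [RHS]mxtrace_mulC mulmxA.
rewrite {1}(specE Nm_herm) tr_sf ?spectral_unitarymx //.
rewrite -{2}(mul1mx Y) -(sf1 (spectral_unitarymx Nm)) tr_sf ?spectral_unitarymx //.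
rewrite mulr_sumr; apply: ler_sum => j _; rewrite mxE mul1r (dRE Nm_herm).
by rewrite ler_wpM2r // lecR.
Qed.

Lemma abs_wit (hSBS : S *m B *m S = 1%:M) :
  exists w, qf B w = 1 /\ qf A w = (lambda_max Nm)%:C.
Proof.
have [i [-> hi]] := lmax_spec Nm_herm ord0.
exists (row i (spectralmx Nm) *m S); split.
  by rewrite -qf_conj hS hSBS qf1_row.
by rewrite -qf_conj hS -/Nm qf_row_eig.
Qed.

End Abs.

Section Core.
Variables (n : nat) (A B : 'M[C]_n.+1).
Hypotheses (hA : A \is hermsymmx) (hB : pd B).
Local Notation P := (spectralmx B).
Local Notation d := (spectral_diag B).
Let PU : P \is unitarymx := spectral_unitarymx B.
Let hBh : B \is hermsymmx := hB.1.

Definition isqR (z : C) : R := (Num.sqrt (complex.Re z))^-1.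
Definition sqR (z : C) : R := Num.sqrt (complex.Re z).
Definition isq (z : C) : C := (isqR z)%:C.
Definition sq (z : C) : C := (sqR z)%:C.
Definition Rt := sf P (map_mx sq d).
Local Notation S := (mx_inv_sqrt B).

Lemma SE : S = sf P (map_mx isq d).
Proof. by rewrite /mx_inv_sqrt /mxfun invmx_unitary. Qed.

Lemma S_tr : S^t* = S.
Proof.
rewrite SE (sf_herm P) //; exact: (map_conjR isqR).
Qed.

Lemma Rt_tr : Rt^t* = Rt.
Proof.
rewrite /Rt (sf_herm P) //; exact: (map_conjR sqR).
Qed.

Lemma sqrt_facts j : let s := Num.sqrt (dR B j) in 0 < s /\ s * s = dR B j.
Proof.
have h := pd_dR hB j; split; first by rewrite sqrtr_gt0.
by rewrite -expr2 sqr_sqrtr // ltW.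
Qed.

Lemma SBS : S *m B *m S = 1%:M.
Proof.
rewrite SE [X in _ *m X *m _](specE hBh) !sfM // -(sf1 PU); congr sf.
apply/matrixP => i j; rewrite !mxE (dRE hBh) /= -!rmorphM /=.
have [h1 h2] := sqrt_facts j.
move: h1 h2; set s := Num.sqrt _ => h1 h2.
have -> : s^-1 * dR B j / s = 1.
  by rewrite -h2; field; exact: lt0r_neq0.
by [].
Qed.

Lemma RtS : Rt *m S = 1%:M.
Proof.
rewrite SE /Rt sfM // -(sf1 PU); congr sf.
apply/matrixP => i j; rewrite !mxE (dRE hBh) /= -!rmorphM /=.
have [h1 h2] := sqrt_facts j.
move: h1 h2; set s := Num.sqrt _ => h1 h2.
by rewrite divff // lt0r_neq0.
Qed.

Lemma SRt : S *m Rt = 1%:M.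
Proof.
rewrite SE /Rt sfM // -(sf1 PU); congr sf.
apply/matrixP => i j; rewrite !mxE (dRE hBh) /= -!rmorphM /=.
have [h1 h2] := sqrt_facts j.
move: h1 h2; set s := Num.sqrt _ => h1 h2.
by rewrite mulVf // lt0r_neq0.
Qed.

Lemma RtRt : Rt *m Rt = B.
Proof.
rewrite [RHS](specE hBh) /Rt sfM //; congr sf.
apply/matrixP => i j; rewrite !mxE (dRE hBh) /= -!rmorphM /=.
have [h1 h2] := sqrt_facts j.
by rewrite h2 ord1 (dRE hBh).
Qed.

Lemma core_tr (X : 'M[C]_n.+1) : (forall v, 0 <= qf X v) ->
  \tr (A *m X) <= (lambda_max (S *m A *m S))%:C * \tr (B *m X).
Proof. exact: (abs_tr hA S_tr Rt_tr RtS SRt RtRt). Qed.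

Lemma core_wit : exists w, qf B w = 1 /\ qf A w = (lambda_max (S *m A *m S))%:C.
Proof. exact: (abs_wit hA S_tr SBS). Qed.

End Core.

Lemma trC_entry m k (M : 'M[C]_(m, k)) i j : (M^t*) j i = (M i j)^*.
Proof. by rewrite !mxE. Qed.

Lemma hermB k (M N : 'M[C]_k) : M \is hermsymmx -> N \is hermsymmx ->
  (M - N) \is hermsymmx.
Proof.
move=> /hermP/matrixP hM /hermP/matrixP hN; apply: hermI.
apply/matrixP => i j; move: (hM i j) (hN i j); rewrite !mxE => <- <-.
by rewrite rmorphB.
Qed.

Lemma hermZR k (r : R) (M : 'M[C]_k) : M \is hermsymmx -> (r%:C *: M) \is hermsymmx.
Proof.
move=> /hermP/matrixP hM; apply: hermI.
apply/matrixP => i j; move: (hM i j); rewrite !mxE => <-.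
by rewrite rmorphM /= conjR.
Qed.

Lemma herm1 k : (1%:M : 'M[C]_k) \is hermsymmx.
Proof. exact: hermitian1mx_subproof. Qed.

Lemma herm_rank1 k (w : 'rV[C]_k) : (w^t* *m w) \is hermsymmx.
Proof. by apply: hermI; rewrite trmx_mul map_mxM trmxCK. Qed.

Lemma mx11_mul (a b : 'M[C]_1) : (a *m b) 0 0 = a 0 0 * b 0 0.
Proof. by rewrite mxE big_ord1. Qed.

Lemma qf_rank1 k (w u : 'rV[C]_k) :
  qf (w^t* *m w) u = (u *m w^t*) 0 0 * ((u *m w^t*) 0 0)^*.
Proof.
rewrite /qf mulmxA -mulmxA mx11_mul; congr (_ * _).
have -> : w *m u^t* = (u *m w^t*)^t* by rewrite trmx_mul map_mxM trmxCK.
by rewrite trC_entry.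
Qed.

Lemma tr_rank1 k (M : 'M[C]_k) (w : 'rV[C]_k) : \tr (M *m (w^t* *m w)) = qf M w.
Proof. by rewrite mulmxA mxtrace_mulC trace_mx11 /qf mulmxA. Qed.

Lemma CS k (u w : 'rV[C]_k) :
  (u *m w^t*) 0 0 * ((u *m w^t*) 0 0)^* <= qf 1%:M u * qf 1%:M w.
Proof.
rewrite !qf_dot -dotmxE -normCK.
exact: (CauchySchwarz (@dotmx _ k) u w).1.
Qed.

Lemma inf_eq (E : set R) m : E m -> (forall y, E y -> m <= y) -> inf E = m.
Proof.
move=> Em lb; apply/eqP; rewrite eq_le; apply/andP; split.
  by apply: ge_inf => //; exists m.
by apply: lb_le_inf => //; exists m.
Qed.

Lemma ReM_R (r : R) (z : C) : complex.Re (r%:C * z) = r * complex.Re z.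
Proof. by case: z => a b; rewrite /= mul0r subr0. Qed.

Lemma qf_neq0 k (B : 'M[C]_k) w : qf B w = 1 -> w != 0.
Proof. by move=> h; apply/eqP => w0; move: h; rewrite w0 qf0 => /eqP; rewrite eq_sym oner_eq0. Qed.

Lemma psd_of_le0 k (Q : 'M[C]_k) : loewner_le 0 Q -> forall v, 0 <= qf Q v.
Proof. by move=> [_ h] v; move: (h v); rewrite subr0. Qed.

Lemma psd_of_le1 k (Q : 'M[C]_k) : loewner_le Q 1%:M -> forall v, 0 <= qf (1%:M - Q) v.
Proof. by move=> [_ h] v; apply: h. Qed.

Lemma trB k (M N : 'M[C]_k) : \tr (M - N) = \tr M - \tr N.
Proof. exact: raddfB. Qed.

Section Main.
Variables (n : nat) (rho sigma : 'M[C]_n.+1).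
Hypotheses (hr : pd rho) (hs : pd sigma) (tr_r : \tr rho = 1) (tr_s : \tr sigma = 1).

Lemma lmin_bound x : x <= lambda_min rho ->
  forall w, x%:C * qf 1%:M w <= qf rho w.
Proof.
move=> hx w; have [i [hi hmin]] := lmin_spec hr.1 ord0.
by apply: (rayleigh_ge hr.1) => j; rewrite (le_trans hx) // hi hmin.
Qed.

Lemma rank1_le1 (c : R) (w : 'rV[C]_n.+1) : 0 <= c -> c%:C * qf 1%:M w <= 1 ->
  forall u, 0 <= qf (1%:M - c%:C *: (w^t* *m w)) u.
Proof.
move=> c0 hc u; rewrite qfB qfZ qf_rank1 subr_ge0.
apply: le_trans (ler_wpM2l _ (CS u w)) _; first by rewrite lecR.
by rewrite mulrCA ler_piMr // qf1_ge0.
Qed.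

Lemma rank1_ge0 (c : R) (w : 'rV[C]_n.+1) : 0 <= c ->
  forall u, 0 <= qf (c%:C *: (w^t* *m w)) u.
Proof.
by move=> c0 u; rewrite qfZ qf_rank1 mulr_ge0 ?lecR // mul_conjC_ge0.
Qed.

Lemma claim1 x : 0 <= x -> x <= lambda_min rho ->
  beta (1 - x) rho sigma = x * expR (- D_plus_infty rho sigma).
Proof.
move=> x0 hx.
have [w [hw1 hw2]] := core_wit hr.1 hs.
move: hw2; set l := lambda_max _ => hw2.
have wn0 := qf_neq0 hw1.
have lpos : 0 < l by rewrite -ltcR -hw2; apply: hr.2.
rewrite /D_plus_infty -/l expRN lnK ?posrE //.
have hxw : x%:C * qf 1%:M w <= l%:C by rewrite -hw2 lmin_bound.
have e1 : 1 - (1 - x) = x by rewrite opprB addrC subrK.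
rewrite /beta; apply: inf_eq.
  exists ((x / l)%:C *: (w^t* *m w)); last first.
    by rewrite -scalemxAr mxtraceZ tr_rank1 hw1 mulr1.
  split; [|split].
  - split; first by rewrite subr0; apply: hermZR; apply: herm_rank1.
    by move=> u; rewrite subr0; apply: rank1_ge0; rewrite divr_ge0 // ltW.
  - split; first by apply: hermB; [apply: herm1 | apply: hermZR; apply: herm_rank1].
    apply: rank1_le1; first by rewrite divr_ge0 // ltW.
    rewrite rmorphM fmorphV /= mulrAC ler_pdivrMr ?ltcR // mul1r //.
  - rewrite e1 -scalemxAr mxtraceZ tr_rank1 hw2 -rmorphM lecR divfK //.
    exact: lt0r_neq0.
move=> y [Q [hQ0 [hQ1 hQtr]] <-].
have := core_tr hr.1 hs (psd_of_le0 hQ0); rewrite -/l.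
move: hQtr; rewrite e1 => hQtr /(le_trans hQtr).
rewrite lecE => /andP[_]; rewrite ReM_R /= => h.
by rewrite ler_pdivrMr // mulrC.
Qed.

Lemma claim2 x : 0 <= x -> x <= lambda_min rho ->
  1 - beta x rho sigma = x * expR (- D_minus_infty rho sigma).
Proof.
move=> x0 hx.
have [w [hw1 hw2]] := core_wit hs.1 hr.
move: hw2; set l := lambda_max _ => hw2.
have wn0 := qf_neq0 hw1.
have lpos : 0 < l by rewrite -ltcR -hw2; apply: hs.2.
rewrite /D_minus_infty -/l [X in expR X]opprK lnK ?posrE //.
have hxw : x%:C * qf 1%:M w <= 1 by have := lmin_bound hx w; rewrite hw1.
suff -> : beta x rho sigma = 1 - x * l by rewrite opprB addrC subrK.
rewrite /beta; apply: inf_eq.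
  exists (1%:M - x%:C *: (w^t* *m w)); last first.
    rewrite mulmxBr mulmx1 trB -scalemxAr mxtraceZ tr_rank1 hw2 tr_s.
    by rewrite -rmorphM.
  split; [|split].
  - split; first by rewrite subr0; apply: hermB; [apply: herm1 | apply: hermZR; apply: herm_rank1].
    by move=> u; rewrite subr0; apply: rank1_le1.
  - rewrite /loewner_le opprB addrC subrK.
    split; first by apply: hermZR; apply: herm_rank1.
    by move=> u; apply: rank1_ge0.
  - rewrite mulmxBr mulmx1 trB -scalemxAr mxtraceZ tr_rank1 hw1 tr_r mulr1.
    by rewrite rmorphB rmorph1.
move=> y [Q [hQ0 [hQ1 hQtr]] <-].
have := core_tr hs.1 hr (psd_of_le1 hQ1); rewrite -/l.
rewrite !mulmxBr !mulmx1 !trB tr_r tr_s => h.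
have h2 : 1 - \tr (rho *m Q) <= x%:C.
  by rewrite lerBlDr -lerBlDl -(rmorph1 (real_complex R)) -rmorphB.
have := le_trans h (ler_wpM2l _ h2); rewrite lecR ltW // => /(_ isT).
rewrite lerBlDr -lerBlDl -rmorphM -(rmorph1 (real_complex R)) -rmorphB.
by rewrite lecE => /andP[_]; rewrite mulrC.
Qed.

End Main.

Lemma trC_sum k I (r : seq I) (F : I -> 'M[C]_k) :
  (\sum_(a <- r) F a)^t* = \sum_(a <- r) (F a)^t*.
Proof.
apply/matrixP => i j; rewrite !mxE !summxE rmorph_sum.
by apply: eq_bigr => a _; rewrite !mxE.
Qed.

Section Pinch.
Variables (n : nat) (tau : 'M[C]_n).
Hypothesis ht : tau \is hermsymmx.
Local Notation P := (spectralmx tau).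
Local Notation d := (spectral_diag tau).
Let PU : P \is unitarymx := spectral_unitarymx tau.

Definition Ea (a : C) : 'rV[C]_n := \row_j ((d 0 j == a)%:R).

Lemma eigenproj_sf a : eigenproj tau a = sf P (Ea a).
Proof.
rewrite /eigenproj; set U := eigenspace tau a.
have Pu := spectral_unit tau.
rewrite -[LHS](mulKmx Pu) -[RHS](mulKmx Pu); congr (_ *m _).
apply/row_matrixP => i; rewrite !row_mul row_sf // mxE.
case: (eqVneq (d 0 i) a) => [dia|dia].
  rewrite proj_ortho_id ?scale1r //; apply/eigenspaceP.
  by rewrite (row_eig ht) -(dRE ht) dia.
rewrite proj_ortho_0 ?scale0r //; apply/orthomx1P.
have hU : U *m tau = a *: U by apply/eigenspaceP.
set r := row i P.
have hr : tau *m r^t* = d 0 i *: r^t*.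
  rewrite -{1}(hermP ht) -map_mxM -trmx_mul (row_eig ht).
  rewrite (dRE ht) linearZ /= map_mxZ /= conjR.
  by [].
have h0 : U *m r^t* = 0.
  have : (a - d 0 i) *: (U *m r^t*) = 0.
    by rewrite scalerBl scalemxAl -hU -mulmxA hr -scalemxAr subrr.
  move/eqP; rewrite scaler_eq0 subr_eq0 => /orP[/eqP ad|/eqP //]; by move: dia; rewrite ad eqxx.
have -> : r *m U^t* = (U *m r^t*)^t*.
  by rewrite (trC_mul U (r^t*)) trCK.
by rewrite h0 trmx0 map_mx0.
Qed.

Lemma sum_Ea : \sum_(a <- spectrum tau) Ea a = const_mx 1.
Proof.
apply/matrixP => i j; rewrite summxE !mxE.
rewrite (bigD1_seq (d 0 j)) ?undup_uniq //=; last first.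
  by rewrite mem_undup map_f // mem_enum.
rewrite mxE eqxx big1 ?addr0 // => a /negbTE; rewrite mxE eq_sym => ->.
by [].
Qed.

Lemma Pi_herm a : (eigenproj tau a)^t* = eigenproj tau a.
Proof.
rewrite eigenproj_sf (sf_herm P) //; apply/matrixP => i j.
by rewrite !mxE conjC_nat.
Qed.

Lemma Pi_idem a : eigenproj tau a *m eigenproj tau a = eigenproj tau a.
Proof.
rewrite eigenproj_sf sfM //; congr sf; apply/matrixP => i j; rewrite !mxE.
by case: (_ == _); rewrite ?mulr1 ?mulr0.
Qed.

Lemma sumPi : \sum_(a <- spectrum tau) eigenproj tau a = 1%:M.
Proof.
under eq_bigr => a _ do rewrite eigenproj_sf.
by rewrite sf_sum // sum_Ea sf1.
Qed.

Lemma pinch_tr X : \tr (pinching tau X) = \tr X.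
Proof.
rewrite /pinching raddf_sum /=.
under eq_bigr => a _ do rewrite mxtrace_mulC mulmxA Pi_idem.
by rewrite -raddf_sum /= -mulmx_suml sumPi mul1mx.
Qed.

Lemma pinch_pd X : pd X -> pd (pinching tau X).
Proof.
move=> [hX pX]; split.
  apply: hermI; rewrite /pinching trC_sum; apply: eq_bigr => a _.
  by rewrite trC3 Pi_herm (hermP hX).
move=> v vn0; rewrite /pinching qf_sum.
under eq_bigr => a _ do rewrite -{2}(Pi_herm a) qf_conj.
case: (boolP (all (fun a => v *m eigenproj tau a == 0) (spectrum tau))).
  move/allP => h; case/negP: vn0.
  rewrite -[v]mulmx1 -sumPi mulmx_sumr big1_seq // => a /andP[_ ha].
  exact/eqP/h.
move/allPn => [a ha hva].
rewrite (bigD1_seq a) ?undup_uniq //=.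
apply: ltr_wpDr; last exact: pX.
apply: sumr_ge0 => b _; case: (eqVneq (v *m eigenproj tau b) 0) => [->|h].
  by rewrite qf0.
exact/ltW/pX.
Qed.

End Pinch.

End S.

Theorem lemma7 (R : realType) (n : nat) (rho sigma : 'M[R[i]]_n) :
  density rho -> density sigma -> full_rank rho -> full_rank sigma ->
  (forall x : R, 0 <= x -> x <= lambda_min rho ->
     [/\ beta (1 - x) rho sigma = x * expR (- D_plus_infty rho sigma),
         1 - beta x rho sigma = x * expR (- D_minus_infty rho sigma),
         betaR (1 - x) rho sigma
           = x * expR (- D_plus_infty rho (pinching rho sigma)) &
         1 - betaR x rho sigma
           = x * expR (- D_minus_infty rho (pinching rho sigma))]) /\
  (forall x : R, 0 <= x -> x <= lambda_min (pinching sigma rho) ->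
     betaL (1 - x) rho sigma
       = x * expR (- D_plus_infty (pinching sigma rho) sigma) /\
     1 - betaL x rho sigma
       = x * expR (- D_minus_infty (pinching sigma rho) sigma)).
Proof.
move=> dr ds fr fs.
have trr := dr.2; have trs := ds.2.
case: n rho sigma dr ds fr fs trr trs => [|n] rho sigma dr ds fr fs trr trs.
  by move: trr; rewrite (flatmx0 rho) mxtrace0 => /eqP; rewrite eq_sym oner_eq0.
have hr := dens_pd dr fr; have hs := dens_pd ds fs.
have hs' := pinch_pd hr.1 hs.
have trs' : \tr (pinching rho sigma) = 1 by rewrite (pinch_tr hr.1).
have hr' := pinch_pd hs.1 hr.
have trr' : \tr (pinching sigma rho) = 1 by rewrite (pinch_tr hs.1).
split.
  move=> x x0 hx; split.
  - exact: claim1.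
  - exact: claim2.
  - by rewrite /betaR; apply: claim1.
  - by rewrite /betaR; apply: claim2.
move=> x x0 hx; split.
  by rewrite /betaL; apply: claim1.
by rewrite /betaL; apply: claim2.
Qed.
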